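(* Suppose $\sigma:\overline{\mathbb F}\to\overline{\mathbb F}$ satisfies Condition 1 with constants $c_1,c_2,\eta\in\mathbb F$, and let $z\in\mathbb F$ with $|z|\le 1^+$. Then there exists a depth-1 $\sigma$-network $\mu_z:\overline{\mathbb F}\to\overline{\mathbb F}$ (i.e., a map $x\mapsto(x\otimes w)\oplus b$ with $w,b\in\mathbb F$) such that one of the following holds: (a) $\gamma(\mu_z^\sharp(\langle-1,z\rangle))\subset[-\Omega,\eta]$ and $\gamma(\mu_z^\sharp(\langle z^+,1\rangle))\subset[\eta^+,\Omega]$; (b) $\gamma(\mu_z^\sharp(\langle-1,z\rangle))\subset[\eta^+,\Omega]$ and $\gamma(\mu_z^\sharp(\langle z^+,1\rangle))\subset[-\Omega,\eta]$.
   Context: Floating point. Fix integers $E\ge 5$ and $M$ with $2^{E-1}\ge M\ge 3$; $\mathfrak e_{\min}=-2^{E-1}+2$, $\mathfrak e_{\max}=2^{E-1}-1$. $\mathbb F=\{(-1)^b(s_0.s_1\dots s_M)_2\cdot 2^e: b,s_i\in\{0,1\},e\in\{\mathfrak e_{\min},\dots,\mathfrak e_{\max}\}\}$, $\overline{\mathbb F}=\mathbb F\cup\{-\infty,+\infty,\mathrm{NaN}\}$, $\Omega=2^{\mathfrak e_{\max}}(2-2^{-M})$, $\varepsilon=2^{-M-1}$. $x^+$ is the next larger element of $\overline{\mathbb F}\setminus\{\mathrm{NaN}\}$ (so $1^+=1+2^{-M}$). $\mathrm{rnd}$ is round-to-nearest-ties-to-even with overflow to $\pm\infty$ at $|x|\ge\Omega+2^{\mathfrak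 e_{\max}}\varepsilon$; $x\oplus y=\mathrm{rnd}(x+y)$, $x\otimes y=\mathrm{rnd}(xy)$ for finite operands (IEEE-754 otherwise). Intervals: $\mathbb I=\{\langle a,b\rangle:a,b\in\overline{\mathbb F}\setminus\{\mathrm{NaN}\},a\le b\}\cup\{\top\}$, $\gamma(\langle a,b\rangle)=[a,b]\cap\overline{\mathbb F}$, $\gamma(\top)=\overline{\mathbb F}$. $\langle a,b\rangle\odot^\sharp\langle c,d\rangle$ ($\odot\in\{\oplus,\otimes\}$) is $\langle\min S,\max S\rangle$ for $S=\{a\odot c,a\odot d,b\odot c,b\odot d\}$, or $\top$ if $\mathrm{NaN}\in S$ or an operand is $\top$. For $\mu_z(x)=(x\otimes w)\oplus b$, $\mu_z^\sharp(\mathcal I)=(\mathcal I\otimes^\sharp\langle w,w\rangle)\oplus^\sharp\langle b,b\rangle$. Condition 1 with constants $c_1,c_2,\eta$: (C1) $\sigma(c_1)=0$, $|\sigma(c_2)|\in[\frac\varepsilon2+2\varepsilon^2,\frac54-2\varepsilon]$, $\max\{|c_1|,|c_2|\}\ge2^{\mathfrak e_{\min}+1}$, and $\sigma(x)$ between $\sigma(c_1),\sigma(c_2)$ for all $x$ between $c_1,c_2$; (C2) $|\eta|\in[2^{\mathfrak e_{\min}+5},4-8\varepsilon]$, $|\sigma(\eta)|,|\sigma(\eta^+)|\in[2^{\mathfrak e_{\min}+5},2^{\mathfrak e_{\max}-6}|\eta|]$, and for all $x,y\in\mathbb F$ with $x\le\eta<\eta^+\le y$, either $\sigma(x)\le\sigma(\eta)<\sigma(\eta^+)\le\sigma(y)$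 or $\sigma(x)\ge\sigma(\eta)>\sigma(\eta^+)\ge\sigma(y)$; (C3) there is $\lambda\in[0,2^{\mathfrak e_{\max}-7}\min\{|\sigma(\eta)|,2^{M+3}\}]$ with $|\sigma(x)-\sigma(\eta)|\le\lambda|x-\eta|$ and $|\sigma(y)-\sigma(\eta^+)|\le\lambda|y-\eta^+|$ for all $x,y\in\mathbb F$ with $x\le\eta<\eta^+\le y$. *)

(* Defs.v *)
From Stdlib Require Import Reals ZArith ClassicalEpsilon Lra Bool.
Open Scope R_scope.

Definition emin (E : nat) : Z := (- 2 ^ (Z.of_nat E - 1) + 2)%Z.
Definition emax (E : nat) : Z := (2 ^ (Z.of_nat E - 1) - 1)%Z.

(** x ∈ 𝔽 : x = (-1)^b (s0.s1...sM)_2 2^e, i.e. x = m 2^(e-M) with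
    m a signed integer with |m| < 2^(M+1) and emin <= e <= emax. *)
Definition is_float (E M : nat) (x : R) : Prop :=
  exists (m e : Z), (Z.abs m < 2 ^ (Z.of_nat M + 1))%Z /\
    (emin E <= e <= emax E)%Z /\
    x = IZR m * powerRZ 2 (e - Z.of_nat M).

Definition Omega (E M : nat) : R :=
  powerRZ 2 (emax E) * (2 - powerRZ 2 (- Z.of_nat M)).
Definition eps (M : nat) : R := powerRZ 2 (- Z.of_nat M - 1).

(** Extended floats 𝔽 ∪ {-∞, +∞, NaN} (elements of a larger carrier; membership below). *)
Inductive xfloat := Fin (r : R) | PInf | NInf | NaN.

Definition in_Fbar (E M : nat) (x : xfloat) : Prop :=
  match x with Fin r => is_float E M r | _ => True end.

Definition xleb (x y : xfloat) : bool :=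
  match x, y with
  | NaN, _ | _, NaN => false
  | NInf, _ => true
  | _, PInf => true
  | Fin a, Fin b => if Rle_dec a b then true else false
  | _, _ => false
  end.
Definition xle (x y : xfloat) : Prop := xleb x y = true.
Definition xlt (x y : xfloat) : Prop := xle x y /\ x <> y.

Definition is_next (E M : nat) (x y : xfloat) : Prop :=
  y <> NaN /\ in_Fbar E M y /\ xlt x y /\
  forall u, u <> NaN -> in_Fbar E M u -> xlt x u -> xle y u.
Definition fsucc (E M : nat) (x : xfloat) : xfloat :=
  epsilon (inhabits NaN) (is_next E M x).

(** f has its canonical representation (normalized, or subnormal with e = emin)
    with an even last significand bit. *)
Definition is_even_float (E M : nat) (f : R) : Prop :=
  exists (m e : Z), (Z.abs m < 2 ^ (Z.of_nat M + 1))%Z /\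
    (emin E <= e <= emax E)%Z /\
    f = IZR m * powerRZ 2 (e - Z.of_nat M) /\
    ((2 ^ Z.of_nat M <= Z.abs m)%Z \/ e = emin E) /\
    Z.even m = true.

Definition is_nearest (E M : nat) (x f : R) : Prop :=
  is_float E M f /\ forall g, is_float E M g -> Rabs (x - f) <= Rabs (x - g).

Definition is_rnd_fin (E M : nat) (x f : R) : Prop :=
  is_nearest E M x f /\
  ((forall g, is_nearest E M x g -> g = f) \/ is_even_float E M f).

Definition rnd (E M : nat) (x : R) : xfloat :=
  let th := Omega E M + powerRZ 2 (emax E) * eps M in
  if Rle_dec th x then PInf
  else if Rle_dec x (- th) then NInf
  else Fin (epsilon (inhabits 0) (is_rnd_fin E M x)).

Definition xadd (E M : nat) (x y : xfloat) : xfloat :=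
  match x, y with
  | NaN, _ | _, NaN => NaN
  | PInf, NInf | NInf, PInf => NaN
  | PInf, _ | _, PInf => PInf
  | NInf, _ | _, NInf => NInf
  | Fin a, Fin b => rnd E M (a + b)
  end.

Definition inf_times (pos : bool) (a : R) : xfloat :=
  if Rlt_dec 0 a then (if pos then PInf else NInf)
  else if Rlt_dec a 0 then (if pos then NInf else PInf)
  else NaN.

Definition xmul (E M : nat) (x y : xfloat) : xfloat :=
  match x, y with
  | NaN, _ | _, NaN => NaN
  | Fin a, Fin b => rnd E M (a * b)
  | PInf, Fin a | Fin a, PInf => inf_times true a
  | NInf, Fin a | Fin a, NInf => inf_times false a
  | PInf, PInf | NInf, NInf => PInf
  | PInf, NInf | NInf, PInf => NInf
  end.

Inductive itv := Itv (a b : xfloat) | Top.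

Definition itv_wf (I : itv) : Prop :=
  match I with Itv a b => xle a b | Top => True end.

Definition gamma (E M : nat) (I : itv) (x : xfloat) : Prop :=
  in_Fbar E M x /\ match I with Itv a b => xle a x /\ xle x b | Top => True end.

Definition is_nan (x : xfloat) : bool := match x with NaN => true | _ => false end.
Definition xmin (x y : xfloat) : xfloat := if xleb x y then x else y.
Definition xmax (x y : xfloat) : xfloat := if xleb x y then y else x.

Definition itv_lift (op : xfloat -> xfloat -> xfloat) (I J : itv) : itv :=
  match I, J with
  | Itv a b, Itv c d =>
      let s1 := op a c in let s2 := op a d in
      let s3 := op b c in let s4 := op b d in
      if orb (orb (is_nan s1) (is_nan s2)) (orb (is_nan s3) (is_nan s4)) then Top
      else Itv (xmin (xmin s1 s2) (xmin s3 s4)) (xmax (xmax s1 s2) (xmax s3 s4))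
  | _, _ => Top
  end.

Definition mu_sharp (E M : nat) (w b : R) (I : itv) : itv :=
  itv_lift (xadd E M) (itv_lift (xmul E M) I (Itv (Fin w) (Fin w))) (Itv (Fin b) (Fin b)).

Definition gamma_sub (E M : nat) (I : itv) (lo hi : xfloat) : Prop :=
  forall x, gamma E M I x -> xle lo x /\ xle x hi.

Definition between (v a b : xfloat) : Prop :=
  (xle a v /\ xle v b) \/ (xle b v /\ xle v a).

Definition abs_in (v : xfloat) (lo hi : R) : Prop :=
  exists r, v = Fin r /\ lo <= Rabs r <= hi.

Definition condition1 (E M : nat) (sigma : xfloat -> xfloat) (c1 c2 eta : R) : Prop :=
  let e := eps M in
  let etap := fsucc E M (Fin eta) in
  (sigma (Fin c1) = Fin 0 /\
   abs_in (sigma (Fin c2)) (e / 2 + 2 * e ^ 2) (5 / 4 - 2 * e) /\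
   Rmax (Rabs c1) (Rabs c2) >= powerRZ 2 (emin E + 1) /\
   (forall x, is_float E M x -> Rmin c1 c2 <= x <= Rmax c1 c2 ->
      between (sigma (Fin x)) (sigma (Fin c1)) (sigma (Fin c2)))) /\
  (powerRZ 2 (emin E + 5) <= Rabs eta <= 4 - 8 * e /\
   abs_in (sigma (Fin eta)) (powerRZ 2 (emin E + 5)) (powerRZ 2 (emax E - 6) * Rabs eta) /\
   abs_in (sigma etap) (powerRZ 2 (emin E + 5)) (powerRZ 2 (emax E - 6) * Rabs eta) /\
   (forall x y, is_float E M x -> is_float E M y ->
      x <= eta -> xlt (Fin eta) etap -> xle etap (Fin y) ->
      (xle (sigma (Fin x)) (sigma (Fin eta)) /\ xlt (sigma (Fin eta)) (sigma etap) /\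
       xle (sigma etap) (sigma (Fin y))) \/
      (xle (sigma (Fin eta)) (sigma (Fin x)) /\ xlt (sigma etap) (sigma (Fin eta)) /\
       xle (sigma (Fin y)) (sigma etap)))) /\
  (exists (lam s0 s1 e1 : R),
     sigma (Fin eta) = Fin s0 /\ sigma etap = Fin s1 /\ etap = Fin e1 /\
     0 <= lam <= powerRZ 2 (emax E - 7) * Rmin (Rabs s0) (powerRZ 2 (Z.of_nat M + 3)) /\
     forall x y, is_float E M x -> is_float E M y -> x <= eta -> eta < e1 -> e1 <= y ->
       (exists r, sigma (Fin x) = Fin r /\ Rabs (r - s0) <= lam * Rabs (x - eta)) /\
       (exists r, sigma (Fin y) = Fin r /\ Rabs (r - s1) <= lam * Rabs (y - e1))).

(* Main.v *)
Require Import Defs.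
From Stdlib Require Import Reals ZArith.
From Stdlib Require Import Lia Lra ClassicalEpsilon Classical Bool.
Open Scope R_scope.

Notation P q := (powerRZ 2 q).

Lemma P_pos q : 0 < P q.
Proof. apply powerRZ_lt; lra. Qed.

Lemma P_add a b : P (a + b) = P a * P b.
Proof. apply powerRZ_add; lra. Qed.

Lemma P_nat n : P (Z.of_nat n) = 2 ^ n.
Proof. rewrite <- pow_powerRZ; reflexivity. Qed.

Lemma IZR_pow2 k : (0 <= k)%Z -> IZR (2 ^ k) = P k.
Proof.
  intro Hk. rewrite <- (Z2Nat.id k Hk). rewrite <- pow_IZR, P_nat. reflexivity.
Qed.

Lemma P_ge1 k : (0 <= k)%Z -> 1 <= P k.
Proof.
  intro Hk. rewrite <- (Z2Nat.id k Hk), P_nat. apply pow_R1_Rle; lra.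
Qed.

Lemma P_ge2 k : (1 <= k)%Z -> 2 <= P k.
Proof.
  intro Hk. replace k with (1 + (k - 1))%Z by lia. rewrite P_add.
  simpl. pose proof (P_ge1 (k-1) ltac:(lia)). lra.
Qed.

Lemma P_le a b : (a <= b)%Z -> P a <= P b.
Proof.
  intro H. replace b with (a + (b - a))%Z by lia. rewrite P_add.
  pose proof (P_ge1 (b - a) ltac:(lia)). pose proof (P_pos a). nra.
Qed.

Lemma P_lt a b : (a < b)%Z -> P a < P b.
Proof.
  intro H. replace b with (a + (b - a))%Z by lia. rewrite P_add.
  pose proof (P_ge2 (b - a) ltac:(lia)). pose proof (P_pos a). nra.
Qed.

Lemma P_lt_inv a b : P a < P b -> (a < b)%Z.
Proof.
  intro H. destruct (Z_lt_le_dec a b) as [h|h]; auto. apply P_le in h. lra.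
Qed.

Lemma P_le_inv a b : P a <= P b -> (a <= b)%Z.
Proof.
  intro H. destruct (Z_le_gt_dec a b) as [h|h]; auto. assert (h2 : (b < a)%Z) by lia. apply P_lt in h2. lra.
Qed.

Lemma P_1 : P 1 = 2. Proof. simpl. lra. Qed.
Lemma P_0 : P 0 = 1. Proof. reflexivity. Qed.

Lemma Pshift e M : P e = P (Z.of_nat M) * P (e - Z.of_nat M).
Proof. rewrite <- P_add. f_equal. lia. Qed.

Lemma abs_le_inv x a : Rabs x <= a -> - a <= x <= a.
Proof. unfold Rabs; destruct (Rcase_abs x); intros; lra. Qed.

Section F.
Variables E M : nat.
Hypothesis HE : (5 <= E)%nat.
Hypothesis HM : (3 <= M)%nat.

Local Notation Mz := (Z.of_nat M).
Local Notation K := (2 ^ Z.of_nat M)%Z.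

Lemma K2 : (2 ^ (Mz + 1) = 2 * K)%Z.
Proof. rewrite Z.pow_add_r by lia. lia. Qed.

Lemma K_ge8 : (8 <= K)%Z.
Proof.
  replace 8%Z with (2^3)%Z by reflexivity.
  apply Z.pow_le_mono_r; lia.
Qed.

Lemma IZR_K : IZR K = P Mz.
Proof. apply IZR_pow2. lia. Qed.

Lemma emax_ge : (15 <= emax E)%Z.
Proof.
  unfold emax. assert (16 <= 2 ^ (Z.of_nat E - 1))%Z; [|lia].
  replace 16%Z with (2^4)%Z by reflexivity. apply Z.pow_le_mono_r; lia.
Qed.

Lemma emin_emax : emin E = (1 - emax E)%Z.
Proof. unfold emin, emax. lia. Qed.

Lemma Keven : Z.even K = true.
Proof. rewrite Z.even_pow by (lia). reflexivity. Qed.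

Lemma abs_lt_P m : (Z.abs m < 2 ^ (Mz + 1))%Z -> Rabs (IZR m) <= IZR (2 * K - 1).
Proof.
  rewrite K2. intro h. rewrite <- abs_IZR. apply IZR_le. lia.
Qed.

Lemma Omega_eq : Omega E M = IZR (2 * K - 1) * P (emax E - Mz).
Proof.
  unfold Omega. rewrite minus_IZR, mult_IZR, IZR_K.
  assert (h : P (- Mz) * P Mz = 1) by (rewrite <- P_add; replace (- Mz + Mz)%Z with 0%Z by lia; reflexivity).
  assert (h2 : P (emax E) = P Mz * P (emax E - Mz)) by (rewrite <- P_add; f_equal; lia).
  rewrite h2. 
  replace (P Mz * P (emax E - Mz) * (2 - P (- Mz))) with
    (2 * P Mz * P (emax E - Mz) - (P (- Mz) * P Mz) * P (emax E - Mz)) by ring.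
  rewrite h. ring.
Qed.

Lemma float_bound x : is_float E M x -> Rabs x <= Omega E M.
Proof.
  intros (m & e & Hm & He & ->). rewrite Omega_eq.
  rewrite Rabs_mult, (Rabs_pos_eq (P _)) by (apply Rlt_le, P_pos).
  apply abs_lt_P in Hm.
  assert (P (e - Mz) <= P (emax E - Mz)) by (apply P_le; lia).
  assert (0 <= IZR (2 * K - 1)) by (apply IZR_le; pose proof K_ge8; lia).
  pose proof (P_pos (e - Mz)). pose proof (Rabs_pos (IZR m)). nra.
Qed.

Lemma float_of q n : (emin E <= q < emax E)%Z -> (Z.abs n <= 2 * K)%Z ->
  is_float E M (IZR n * P (q - Mz)).
Proof.
  intros Hq Hn. destruct (Z.eq_dec (Z.abs n) (2 * K)) as [h|h].
  - exists (n / 2)%Z, (q + 1)%Z. rewrite K2.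
    assert (n = 2 * K \/ n = - (2 * K))%Z as [-> | ->] by lia.
    + rewrite Z.mul_comm, Z.div_mul by lia. split; [pose proof K_ge8; lia|split;[lia|]].
      rewrite mult_IZR. replace (q + 1 - Mz)%Z with (1 + (q - Mz))%Z by lia.
      rewrite P_add, P_1. ring.
    + replace (- (2 * K))%Z with ((- K) * 2)%Z by ring. rewrite Z.div_mul by lia.
      split; [pose proof K_ge8; lia|split;[lia|]].
      rewrite mult_IZR. replace (q + 1 - Mz)%Z with (1 + (q - Mz))%Z by lia.
      rewrite P_add, P_1. ring.
  - exists n, q. rewrite K2. split; [lia|split;[lia|reflexivity]].
Qed.

Lemma float_canon x : is_float E M x -> exists m e,
  (Z.abs m < 2 * K)%Z /\ (emin E <= e <= emax E)%Z /\ x = IZR m * P (e - Mz) /\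
  ((K <= Z.abs m)%Z \/ e = emin E).
Proof.
  intros (m & e & Hm & He & Hx). rewrite K2 in Hm.
  remember (Z.to_nat (e - emin E)) as k eqn:Hk.
  revert m e Hm He Hx Hk. induction k as [|k IH]; intros m e Hm He Hx Hk.
  - exists m, e. repeat split; auto; lia.
  - destruct (Z_le_gt_dec K (Z.abs m)) as [h|h].
    + exists m, e. repeat split; auto; lia.
    + apply (IH (2 * m)%Z (e - 1)%Z); try lia.
      rewrite Hx, mult_IZR. replace (e - Mz)%Z with (1 + (e - 1 - Mz))%Z by lia.
      rewrite P_add, P_1. ring.
Qed.

Lemma float_mult y q : is_float E M y -> (emin E <= q)%Z ->
  (q = emin E \/ P q <= Rabs y) -> exists n, y = IZR n * P (q - Mz).
Proof.
  intros (m & e & Hm & He & Hy) Hq Hor.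
  assert (Hqe : (q <= e)%Z).
  { destruct Hor as [->|Hor]; [lia|].
    apply abs_lt_P in Hm.
    assert (Rabs y < P (e + 1)).
    { rewrite Hy, Rabs_mult, (Rabs_pos_eq (P _)) by (apply Rlt_le, P_pos).
      replace (e + 1)%Z with ((Mz + 1) + (e - Mz))%Z by lia. rewrite P_add.
      assert (IZR (2 * K - 1) < P (Mz + 1)).
      { rewrite <- IZR_pow2 by lia. apply IZR_lt. rewrite K2; lia. }
      pose proof (P_pos (e - Mz)). nra. }
    assert (q < e + 1)%Z by (apply P_lt_inv; lra). lia. }
  exists (m * 2 ^ (e - q))%Z. rewrite Hy, mult_IZR, IZR_pow2 by lia.
  rewrite Rmult_assoc, <- P_add. f_equal. f_equal. lia.
Qed.

Lemma between_mult n n' g : 0 < g -> IZR n * g < IZR n' * g -> IZR n' * g < IZR n * g + g -> False.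
Proof.
  intros Hg H1 H2.
  assert (IZR n < IZR n') by (apply (Rmult_lt_reg_r g); auto).
  assert (IZR n' < IZR (n + 1)) by (rewrite plus_IZR; apply (Rmult_lt_reg_r g); lra).
  apply lt_IZR in H. apply lt_IZR in H0. lia.
Qed.

Lemma PK e : IZR K * P (e - Mz) = P e.
Proof. rewrite IZR_K, <- P_add. f_equal. lia. Qed.

Lemma float_of' q n : (emin E <= q <= emax E)%Z -> (Z.abs n < 2 * K)%Z ->
  is_float E M (IZR n * P (q - Mz)).
Proof. intros. exists n, q. rewrite K2. repeat split; auto; lia. Qed.

Lemma even_of q n : (emin E <= q <= emax E)%Z -> (Z.abs n < 2 * K)%Z ->
  ((K <= Z.abs n)%Z \/ q = emin E) -> Z.even n = true ->
  is_even_float E M (IZR n * P (q - Mz)).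
Proof. intros. exists n, q. rewrite K2. repeat split; auto; lia. Qed.

Lemma Zeven_succ_neg m : Z.even (m + 1) = negb (Z.even m).
Proof. rewrite Z.even_add. destruct (Z.even m); reflexivity. Qed.

Lemma succ_float m e : (Z.abs m < 2 * K)%Z -> (emin E <= e <= emax E)%Z ->
  IZR m * P (e - Mz) < Omega E M -> is_float E M (IZR (m + 1) * P (e - Mz)).
Proof.
  intros Hm He HO. pose proof K_ge8.
  destruct (Z.eq_dec (m + 1) (2 * K)) as [h1|h1].
  - destruct (Z.eq_dec e (emax E)) as [h2|h2].
    + exfalso. subst e. rewrite Omega_eq in HO. replace m with (2 * K - 1)%Z in HO by lia. lra.
    + rewrite h1. apply float_of; lia.
  - apply float_of'; lia.
Qed.

Lemma succ_ex x : is_float E M x -> x < Omega E M -> exists q n,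
  (emin E <= q <= emax E)%Z /\ x = IZR n * P (q - Mz) /\
  (Z.abs n <= 2 * K)%Z /\ (Z.abs (n + 1) <= 2 * K)%Z /\
  is_float E M (x + P (q - Mz)) /\
  (forall y, is_float E M y -> x < y -> x + P (q - Mz) <= y) /\
  (q = emin E \/ P q <= Rabs x) /\
  (is_even_float E M x \/ is_even_float E M (x + P (q - Mz))).
Proof.
  intros Hf HO. pose proof K_ge8 as HK8.
  destruct (float_canon x Hf) as (m & e & Hm & He & Hx & Hc).
  destruct (classic (m = (- K)%Z /\ e <> emin E)) as [[Hmk Hee]|Hn].
  {
    subst m. exists (e - 1)%Z, (- (2 * K))%Z.
    assert (Hx' : x = IZR (- (2 * K)) * P (e - 1 - Mz)).
    { rewrite Hx. replace (e - Mz)%Z with (1 + (e - 1 - Mz))%Z by lia.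
      rewrite P_add, P_1, !opp_IZR, mult_IZR. ring. }
    assert (Hs : x + P (e - 1 - Mz) = IZR (- (2 * K) + 1) * P (e - 1 - Mz)).
    { rewrite Hx', plus_IZR. ring. }
    split; [lia|]. split; [exact Hx'|]. split; [lia|]. split; [lia|].
    split. { rewrite Hs. apply float_of'; lia. }
    split.
    { intros y Hy Hxy. destruct (Rle_lt_dec (x + P (e - 1 - Mz)) y) as [h|h]; auto.
      exfalso.
      assert (Hay : P (e - 1) <= Rabs y).
      { rewrite Hs in h. rewrite <- (PK (e - 1)).
        assert (IZR (- (2 * K) + 1) <= - IZR K) by (rewrite <- opp_IZR; apply IZR_le; lia).
        pose proof (P_pos (e - 1 - Mz)).
        assert (y < - (IZR K * P (e - 1 - Mz))) by nra.
        assert (0 <= IZR K) by (apply IZR_le; lia).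
        rewrite Rabs_left1 by nra. lra. }
      destruct (float_mult y (e - 1) Hy ltac:(lia) (or_intror Hay)) as [n' Hn'].
      rewrite Hn', Hx' in *. eapply between_mult; [apply P_pos| |]; eauto. }
    split. { right. rewrite Hx, Rabs_mult, opp_IZR, Rabs_Ropp, Rabs_pos_eq.
      rewrite (Rabs_pos_eq (P _)) by (apply Rlt_le, P_pos). rewrite PK. apply P_le; lia. apply IZR_le; lia. }
    left. rewrite Hx. apply even_of; try lia.
    rewrite Z.even_opp. apply Keven. }
  assert (Hcase : e = emin E \/ (K <= Z.abs m /\ m <> - K)%Z).
  { destruct (Z.eq_dec e (emin E)); [left; auto|right; split; [lia|]]. intro; apply Hn; auto. }
  exists e, m.
  assert (Hs : x + P (e - Mz) = IZR (m + 1) * P (e - Mz)) by (rewrite Hx, plus_IZR; ring).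
  split; [lia|]; split; [exact Hx|]; split; [lia|]; split; [lia|].
  assert (HsF : is_float E M (x + P (e - Mz))) by
    (rewrite Hs; apply succ_float; [lia|lia|rewrite <- Hx; exact HO]).
  split; [exact HsF|].
  split.
  { intros y Hy Hxy. destruct (Rle_lt_dec (x + P (e - Mz)) y) as [h|h]; auto. exfalso.
    assert (Hor : e = emin E \/ P e <= Rabs y).
    { destruct Hcase as [Hcase|[Hk Hmk]]; [left; auto|right].
      destruct (Z_le_gt_dec 0 m) as [h0|h0].
      - assert (K <= m)%Z by lia.
        assert (P e <= x) by (rewrite Hx, <- PK; apply Rmult_le_compat_r;
           [apply Rlt_le, P_pos | apply IZR_le; lia]).
        pose proof (P_pos e). rewrite Rabs_pos_eq; lra.
      - assert (m + 1 <= - K)%Z by lia.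
        assert (y < - P e).
        { rewrite Hs in h. rewrite <- PK.
          assert (IZR (m + 1) <= - IZR K) by (rewrite <- opp_IZR; apply IZR_le; lia).
          pose proof (P_pos (e - Mz)). nra. }
        rewrite Rabs_left1 by (pose proof (P_pos e); lra). lra. }
    destruct (float_mult y e Hy ltac:(lia) Hor) as [n' Hn'].
    rewrite Hn', Hx in *. eapply between_mult; [apply P_pos| |]; eauto. }
  split.
  { destruct Hcase as [Hcase|[Hk Hmk]]; [left; auto|right].
    rewrite Hx, Rabs_mult, (Rabs_pos_eq (P _)) by (apply Rlt_le, P_pos).
    rewrite <- PK; apply Rmult_le_compat_r; [apply Rlt_le, P_pos|].
    rewrite <- abs_IZR; apply IZR_le; lia. }
  assert (Hcan : (K <= Z.abs m)%Z \/ e = emin E) by lia.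
  destruct (Z.even m) eqn:Ev.
  { left; rewrite Hx; apply even_of; auto; lia. }
  right; rewrite Hs.
  destruct (Z.eq_dec (m + 1) (2 * K)) as [h1|h1].
  { replace (IZR (m + 1) * P (e - Mz)) with (IZR K * P (e + 1 - Mz))
       by (rewrite h1, mult_IZR; replace (e + 1 - Mz)%Z with (1 + (e - Mz))%Z by lia; rewrite P_add, P_1; ring).
    assert (e <> emax E).
    { intro; subst e. rewrite Hx, Omega_eq in HO. replace m with (2 * K - 1)%Z in HO by lia. lra. }
    apply even_of; [lia|lia|lia|apply Keven]. }
  apply even_of; [lia|lia| |rewrite Zeven_succ_neg, Ev; reflexivity].
  lia.
Qed.


Lemma xle_Fin a b : xle (Fin a) (Fin b) <-> a <= b.
Proof.
  unfold xle, xleb. destruct (Rle_dec a b); split; intro; auto; try discriminate; lra.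
Qed.

Lemma xle_trans a b c : xle a b -> xle b c -> xle a c.
Proof.
  unfold xle, xleb. destruct a, b, c; auto; try discriminate;
  repeat match goal with |- context [Rle_dec ?x ?y] => destruct (Rle_dec x y) end;
  repeat match goal with H: context [Rle_dec ?x ?y] |- _ => destruct (Rle_dec x y) end;
  auto; try discriminate; intros; lra.
Qed.

Lemma xle_antisym a b : xle a b -> xle b a -> a = b.
Proof.
  unfold xle, xleb. destruct a, b; auto; try discriminate;
  repeat match goal with |- context [Rle_dec ?x ?y] => destruct (Rle_dec x y) end;
  auto; try discriminate; intros; f_equal; lra.
Qed.

Lemma fsucc_eq x y : is_next E M x y -> fsucc E M x = y.
Proof.
  intro H. unfold fsucc.
  pose proof (epsilon_spec (inhabits NaN) (is_next E M x) (ex_intro _ y H)) as H2.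
  set (y' := epsilon _ _) in *.
  destruct H as (H1 & H3 & H4 & H5). destruct H2 as (H1' & H3' & H4' & H5').
  apply xle_antisym; [apply H5'|apply H5]; auto.
Qed.

Lemma fsucc_fin x : is_float E M x -> x < Omega E M -> exists q n,
  (emin E <= q <= emax E)%Z /\ x = IZR n * P (q - Mz) /\
  (Z.abs n <= 2 * K)%Z /\ (Z.abs (n + 1) <= 2 * K)%Z /\
  is_float E M (x + P (q - Mz)) /\
  (forall y, is_float E M y -> x < y -> x + P (q - Mz) <= y) /\
  (q = emin E \/ P q <= Rabs x) /\
  fsucc E M (Fin x) = Fin (x + P (q - Mz)).
Proof.
  intros Hf HO. destruct (succ_ex x Hf HO) as (q & n & H1 & H2 & H3 & H4 & H5 & H6 & H7 & _).
  exists q, n. repeat (split; [assumption|]).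
  apply fsucc_eq. pose proof (P_pos (q - Mz)).
  split; [discriminate|]. split; [exact H5|]. split.
  { split; [apply xle_Fin; lra|]. intro h; injection h; lra. }
  intros u Hu HuF [Hl Hne]. destruct u as [r| | |].
  - apply xle_Fin. apply H6; auto. apply xle_Fin in Hl. destruct (Req_dec x r); [subst; congruence|lra].
  - reflexivity.
  - discriminate Hl.
  - congruence.
Qed.

Lemma eps_pos : 0 < eps M.
Proof. unfold eps. apply P_pos. Qed.

Lemma Omega_lt_T : Omega E M < Omega E M + P (emax E) * eps M.
Proof. pose proof eps_pos. pose proof (P_pos (emax E)). nra. Qed.

Lemma rnd_float x : is_float E M x -> rnd E M x = Fin x.
Proof.
  intro Hf. pose proof (float_bound x Hf). pose proof Omega_lt_T.
  apply abs_le_inv in H.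
  unfold rnd. destruct (Rle_dec _ x); [lra|]. destruct (Rle_dec x _); [lra|].
  f_equal.
  assert (Hx : is_rnd_fin E M x x).
  { split. split; auto. intros. rewrite Rminus_diag, Rabs_R0. apply Rabs_pos.
    left. intros g [_ Hg]. specialize (Hg x Hf). rewrite Rminus_diag, Rabs_R0 in Hg.
    apply abs_le_inv in Hg. lra. }
  pose proof (epsilon_spec (inhabits 0) (is_rnd_fin E M x) (ex_intro _ x Hx)) as [[_ H2] _].
  specialize (H2 x Hf). rewrite Rminus_diag, Rabs_R0 in H2.
  set (r := epsilon _ _) in *.
  apply abs_le_inv in H2. lra.
Qed.

Lemma Zmax_ex (S : Z -> Prop) n0 B : S n0 -> (forall n, S n -> (n <= B)%Z) ->
  exists n, S n /\ forall m, S m -> (m <= n)%Z.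
Proof.
  intros H0 HB.
  assert (Hk : forall k n0, (Z.to_nat (B - n0) <= k)%nat -> S n0 ->
     exists n, S n /\ forall m, S m -> (m <= n)%Z).
  { induction k as [|k IH]; intros n1 Hk1 Hn1.
    - exists n1. split; auto. intros m Hm. pose proof (HB m Hm). pose proof (HB n1 Hn1). lia.
    - destruct (classic (exists m, S m /\ (n1 < m)%Z)) as [[m [Hm Hlt]]|Hno].
      + apply (IH m); auto. pose proof (HB m Hm). lia.
      + exists n1. split; auto. intros m Hm. destruct (Z_le_gt_dec m n1); auto.
        exfalso. apply Hno. exists m. split; auto. lia. }
  apply (Hk _ n0 (le_n _) H0).
Qed.

Lemma near_lo y lo hi : (forall f, is_float E M f -> f <= lo \/ hi <= f) ->
  lo <= y <= hi -> y - lo <= hi - y -> is_float E M lo -> is_nearest E M y lo.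
Proof.
  intros Hf Hy Hd Hlo. split; auto. intros g Hg.
  rewrite (Rabs_pos_eq (y - lo)) by lra.
  destruct (Hf g Hg); [rewrite Rabs_pos_eq | rewrite Rabs_left1]; lra.
Qed.

Lemma near_hi y lo hi : (forall f, is_float E M f -> f <= lo \/ hi <= f) ->
  lo <= y <= hi -> hi - y <= y - lo -> is_float E M hi -> is_nearest E M y hi.
Proof.
  intros Hf Hy Hd Hhi. split; auto. intros g Hg.
  rewrite (Rabs_left1 (y - hi)) by lra.
  destruct (Hf g Hg); [rewrite Rabs_pos_eq | rewrite Rabs_left1]; lra.
Qed.

Lemma uniq_lo y lo hi : (forall f, is_float E M f -> f <= lo \/ hi <= f) ->
  lo <= y <= hi -> y - lo < hi - y -> is_float E M lo ->
  forall g, is_nearest E M y g -> g = lo.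
Proof.
  intros Hf Hy Hd Hlo g [Hg Hn]. specialize (Hn lo Hlo).
  rewrite (Rabs_pos_eq (y - lo)) in Hn by lra.
  destruct (Hf g Hg); [rewrite Rabs_pos_eq in Hn | rewrite Rabs_left1 in Hn]; lra.
Qed.

Lemma uniq_hi y lo hi : (forall f, is_float E M f -> f <= lo \/ hi <= f) ->
  lo <= y <= hi -> hi - y < y - lo -> is_float E M hi ->
  forall g, is_nearest E M y g -> g = hi.
Proof.
  intros Hf Hy Hd Hhi g [Hg Hn]. specialize (Hn hi Hhi).
  rewrite (Rabs_left1 (y - hi)) in Hn by lra.
  destruct (Hf g Hg); [rewrite Rabs_pos_eq in Hn | rewrite Rabs_left1 in Hn]; lra.
Qed.

Lemma rnd_exists y : - Omega E M <= y <= Omega E M -> exists r, is_rnd_fin E M y r.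
Proof.
  intros Hy. pose proof K_ge8 as HK8.
  set (u := P (emin E - Mz)). assert (Hu : 0 < u) by apply P_pos.
  assert (HmO : is_float E M (- Omega E M)).
  { replace (- Omega E M) with (IZR (- (2 * K - 1)) * P (emax E - Mz))
      by (rewrite Omega_eq, opp_IZR; ring).
    apply float_of'; pose proof emax_ge; pose proof emin_emax; lia. }
  destruct (float_mult (- Omega E M) (emin E) HmO ltac:(lia) (or_introl eq_refl)) as [n0 Hn0].
  set (S := fun n => is_float E M (IZR n * u) /\ IZR n * u <= y).
  destruct (Zmax_ex S n0 (up (y / u))) as [ns [[Hsf Hsy] Hmax]].
  { split; fold u in Hn0; rewrite <- Hn0; auto; lra. }
  { intros n [_ Hn]. destruct (archimed (y / u)) as [Ha _].
    assert (IZR n <= y / u) by (apply (Rmult_le_reg_r u); auto; unfold Rdiv;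
      rewrite Rmult_assoc, Rinv_l, Rmult_1_r; lra).
    assert (IZR n < IZR (up (y / u))) by lra. apply lt_IZR in H0. lia. }
  set (lo := IZR ns * u) in *.
  assert (Hlomax : forall f, is_float E M f -> f <= y -> f <= lo).
  { intros f Hf Hfy. destruct (float_mult f (emin E) Hf ltac:(lia) (or_introl eq_refl)) as [nf Hnf].
    fold u in Hnf. assert (S nf) by (split; rewrite <- Hnf; auto).
    specialize (Hmax nf H). unfold lo. rewrite Hnf. apply Rmult_le_compat_r; [lra|]. apply IZR_le; auto. }
  destruct (Req_dec lo y) as [Heq|Hne].
  { exists y. split.
    - split. rewrite <- Heq; auto. intros. rewrite Rminus_diag, Rabs_R0. apply Rabs_pos.
    - left. intros g [_ Hg]. specialize (Hg y ltac:(rewrite <- Heq; auto)).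
      rewrite Rminus_diag, Rabs_R0 in Hg. apply abs_le_inv in Hg. lra. }
  assert (Hlt : lo < y) by lra.
  destruct (succ_ex lo Hsf ltac:(lra)) as (q & n & _ & _ & _ & _ & Hhf & Hnext & _ & Hev).
  set (hi := lo + P (q - Mz)) in *. pose proof (P_pos (q - Mz)).
  assert (Hhy : y < hi).
  { destruct (Rlt_le_dec y hi) as [h|h]; auto. specialize (Hlomax hi Hhf h). unfold hi in Hlomax. lra. }
  assert (Hsep : forall f, is_float E M f -> f <= lo \/ hi <= f).
  { intros f Hf. destruct (Rle_lt_dec f lo); [left; auto|right; apply Hnext; auto]. }
  destruct (Rlt_le_dec (y - lo) (hi - y)) as [h1|h1].
  { exists lo. split. apply (near_lo y lo hi); auto; lra. left. apply (uniq_lo y lo hi); auto; lra. }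
  destruct (Rlt_le_dec (hi - y) (y - lo)) as [h2|h2].
  { exists hi. split. apply (near_hi y lo hi); auto; lra. left. apply (uniq_hi y lo hi); auto; lra. }
  destruct Hev as [Hev|Hev].
  { exists lo. split. apply (near_lo y lo hi); auto; lra. right; auto. }
  { exists hi. split. apply (near_hi y lo hi); auto; lra. right; auto. }
Qed.

Lemma rnd_bounds y A B : - Omega E M <= y <= Omega E M -> is_float E M A -> is_float E M B ->
  A <= y -> y <= B -> exists r, rnd E M y = Fin r /\ A <= r <= B.
Proof.
  intros Hy HA HB HAy HyB. pose proof Omega_lt_T.
  unfold rnd. destruct (Rle_dec _ y); [lra|]. destruct (Rle_dec y _); [lra|].
  destruct (rnd_exists y Hy) as [r0 Hr0].
  pose proof (epsilon_spec (inhabits 0) (is_rnd_fin E M y) (ex_intro _ r0 Hr0)) as [[_ Hn] _].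
  set (r := epsilon _ _) in *. exists r. split; auto.
  pose proof (Hn A HA). pose proof (Hn B HB).
  split.
  - destruct (Rle_lt_dec A r) as [h|h]; auto.
    rewrite (Rabs_pos_eq (y - A)) in H0 by lra. rewrite Rabs_pos_eq in H0 by lra. lra.
  - destruct (Rle_lt_dec r B) as [h|h]; auto.
    rewrite (Rabs_left1 (y - B)) in H1 by lra. rewrite Rabs_left1 in H1 by lra. lra.
Qed.


Lemma xmin_P (Pr : xfloat -> Prop) a b : Pr a -> Pr b -> Pr (xmin a b).
Proof. unfold xmin. destruct (xleb a b); auto. Qed.
Lemma xmax_P (Pr : xfloat -> Prop) a b : Pr a -> Pr b -> Pr (xmax a b).
Proof. unfold xmax. destruct (xleb a b); auto. Qed.

Lemma gs_lemma x1 x2 w b v1 v2 A B :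
  xmul E M (Fin x1) (Fin w) = Fin v1 -> xmul E M (Fin x2) (Fin w) = Fin v2 ->
  (exists r, xadd E M (Fin v1) (Fin b) = Fin r /\ A <= r <= B) ->
  (exists r, xadd E M (Fin v2) (Fin b) = Fin r /\ A <= r <= B) ->
  gamma_sub E M (mu_sharp E M w b (Itv (Fin x1) (Fin x2))) (Fin A) (Fin B).
Proof.
  intros H1 H2 [r1 [H3 H3']] [r2 [H4 H4']].
  unfold mu_sharp. cbv beta iota zeta delta [itv_lift]. rewrite H1, H2. cbn [is_nan orb].
  set (lo := xmin _ _). set (hi := xmax _ _).
  assert (Hlo : lo = Fin v1 \/ lo = Fin v2) by (apply xmin_P; apply xmin_P; auto).
  assert (Hhi : hi = Fin v1 \/ hi = Fin v2) by (apply xmax_P; apply xmax_P; auto).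
  set (Q := fun s : xfloat => xle (Fin A) s /\ xle s (Fin B)).
  assert (Q1 : Q (Fin r1)) by (split; apply xle_Fin; lra).
  assert (Q2 : Q (Fin r2)) by (split; apply xle_Fin; lra).
  destruct Hlo as [-> | ->]; destruct Hhi as [-> | ->]; rewrite ?H3, ?H4; cbn [is_nan orb];
  intros x [_ [Hl Hh]];
  (assert (QL : Q (xmin (xmin (Fin r1) (Fin r1)) (xmin (Fin r1) (Fin r1))) \/ True) by auto);
  match type of Hl with xle ?L _ => assert (QL' : Q L) by (repeat first [apply xmin_P | assumption]) end;
  match type of Hh with xle _ ?U => assert (QU' : Q U) by (repeat first [apply xmax_P | assumption]) end;
  destruct QL' as [QL1 _]; destruct QU' as [_ QU2];
  split; eapply xle_trans; eauto.
Qed.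

Lemma xmul_exact x w v : is_float E M v -> x * w = v -> xmul E M (Fin x) (Fin w) = Fin v.
Proof. intros Hv He. simpl. rewrite He. apply rnd_float; auto. Qed.

Lemma xadd_exact x w v : is_float E M v -> x + w = v -> xadd E M (Fin x) (Fin w) = Fin v.
Proof. intros Hv He. simpl. rewrite He. apply rnd_float; auto. Qed.

Lemma xadd_bounds x w A B : - Omega E M <= x + w <= Omega E M -> is_float E M A -> is_float E M B ->
  A <= x + w -> x + w <= B -> exists r, xadd E M (Fin x) (Fin w) = Fin r /\ A <= r <= B.
Proof. intros. simpl. apply rnd_bounds; auto. Qed.

Lemma small_bound n q : (Z.abs n <= 2 * K)%Z -> (q <= 1)%Z -> Rabs (IZR n * P (q - Mz)) <= 4.
Proof.
  intros Hn Hq. rewrite Rabs_mult, (Rabs_pos_eq (P _)) by (apply Rlt_le, P_pos).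
  assert (Rabs (IZR n) <= 2 * IZR K) by (rewrite <- abs_IZR, <- mult_IZR; apply IZR_le; lia).
  assert (P (q - Mz) <= P (1 - Mz)) by (apply P_le; lia).
  assert (IZR K * P (1 - Mz) = 2) by (rewrite PK; apply P_1).
  pose proof (Rabs_pos (IZR n)). pose proof (P_pos (q - Mz)). nra.
Qed.

Lemma Omega_big : P (emax E) + 4 <= Omega E M.
Proof.
  rewrite Omega_eq. pose proof emax_ge.
  assert (h1 : IZR (2 * K - 1) * P (emax E - Mz) = 2 * P (emax E) - P (emax E - Mz)).
  { rewrite minus_IZR, mult_IZR, <- (PK (emax E)). ring. }
  rewrite h1.
  assert (P (emax E - Mz) <= P (emax E - 3)) by (apply P_le; lia).
  assert (P (emax E) = P (emax E - 3) * 8).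
  { replace (emax E) with ((emax E - 3) + 3)%Z at 1 by lia. rewrite P_add. simpl. ring. }
  assert (P 1 <= P (emax E - 3)) by (apply P_le; lia). rewrite P_1 in *. lra.
Qed.


Lemma Omega_float : is_float E M (Omega E M).
Proof.
  rewrite Omega_eq. pose proof K_ge8; pose proof emax_ge; pose proof emin_emax.
  apply float_of'; lia.
Qed.

Lemma negOmega_float : is_float E M (- Omega E M).
Proof.
  replace (- Omega E M) with (IZR (- (2 * K - 1)) * P (emax E - Mz))
      by (rewrite Omega_eq, opp_IZR; ring).
  pose proof K_ge8; pose proof emax_ge; pose proof emin_emax.
  apply float_of'; lia.
Qed.

Lemma gs_zero x1 x2 eta A B : is_float E M eta -> A <= eta <= B ->
  gamma_sub E M (mu_sharp E M 0 eta (Itv (Fin x1) (Fin x2))) (Fin A) (Fin B).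
Proof.
  intros Hf Hab. assert (H0 : is_float E M 0).
  { replace 0 with (IZR 0 * P (emin E - Mz)) by ring. apply float_of'; pose proof emax_ge; pose proof emin_emax; pose proof K_ge8; lia. }
  apply (gs_lemma _ _ _ _ 0 0); try (apply xmul_exact; auto; ring);
  exists eta; (split; [apply xadd_exact; auto; ring | lra]).
Qed.

Lemma main_sec (sigma : xfloat -> xfloat) (c1 c2 eta z : R) :
  condition1 E M sigma c1 c2 eta -> is_float E M eta ->
  is_float E M z -> xle (Fin (Rabs z)) (fsucc E M (Fin 1)) ->
  exists w b, is_float E M w /\ is_float E M b /\
    let Ilo := Itv (Fin (-1)) (Fin z) in
    let Ihi := Itv (fsucc E M (Fin z)) (Fin 1) in
    let below := (Fin (- Omega E M), Fin eta) in
    let above := (fsucc E M (Fin eta), Fin (Omega E M)) in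
    ((itv_wf Ilo -> gamma_sub E M (mu_sharp E M w b Ilo) (fst below) (snd below)) /\
     (itv_wf Ihi -> gamma_sub E M (mu_sharp E M w b Ihi) (fst above) (snd above)))
    \/
    ((itv_wf Ilo -> gamma_sub E M (mu_sharp E M w b Ilo) (fst above) (snd above)) /\
     (itv_wf Ihi -> gamma_sub E M (mu_sharp E M w b Ihi) (fst below) (snd below))).
Proof.
  intros HC Heta Hz Hzle. cbv zeta. cbn [fst snd].
  pose proof K_ge8 as HK8. pose proof emax_ge as Hemax. pose proof emin_emax as Hemin.
  pose proof Omega_big as HOb. pose proof Omega_float as HOf. pose proof negOmega_float as HnOf. pose proof (P_pos (emax E)) as HPe.
  assert (HP1 : P 1 = 2) by apply P_1.
  assert (HP2 : P 2 = 4) by (simpl; ring).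
  assert (Heta4 : Rabs eta < 4).
  { destruct HC as [_ [[Heta4 _] _]]. pose proof eps_pos. lra. }
  assert (Hfl1 : is_float E M 1).
  { replace 1 with (IZR K * P (0 - Mz)) by (rewrite PK; reflexivity). apply float_of'; lia. }
  assert (HP5 : P 5 <= P (emax E)) by (apply P_le; lia).
  assert (HP5' : P 5 = 32) by (simpl; ring).
  destruct (fsucc_fin 1 Hfl1 ltac:(lra)) as (q1 & n1 & Hq1 & _ & _ & _ & _ & _ & Hq1' & Hs1).
  assert (Hq1le : (q1 <= 0)%Z).
  { destruct Hq1' as [->|h]; [lia|]. rewrite Rabs_R1 in h. apply P_le_inv. rewrite P_0; auto. }
  rewrite Hs1 in Hzle. apply xle_Fin in Hzle.
  assert (P (q1 - Mz) <= P 0) by (apply P_le; lia). rewrite P_0 in H.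
  assert (Hz2 : Rabs z <= 2) by lra. apply abs_le_inv in Hz2.
  pose proof Heta4 as Heta4s. apply Rlt_le, abs_le_inv in Heta4.
  destruct (fsucc_fin eta Heta ltac:(lra)) as
      (qe & a & Hqe & Ha & Ha1 & Ha2 & Hetaf & _ & Hqe' & Hse).
  pose proof (P_pos (qe - Mz)) as Hg. set (g := P (qe - Mz)) in *.
  assert (Hqele : (qe <= 1)%Z).
  { destruct Hqe' as [->|h]; [lia|]. assert (P qe < P 2) by lra.
    apply P_lt_inv in H0. lia. }
  rewrite Hse.
  destruct (fsucc_fin z Hz ltac:(lra)) as
      (qz & c & Hqz & Hc & Hc1 & Hc2 & Hzf & Hznext & Hqz' & Hsz).
  pose proof (P_pos (qz - Mz)) as Hd. set (d := P (qz - Mz)) in *.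
  rewrite Hsz.
  assert (HH0 : forall x, - Omega E M <= x <= eta -> - Omega E M <= x <= eta) by auto.
  assert (Hzero : is_float E M 0).
  { replace 0 with (IZR 0 * P (emin E - Mz)) by ring. apply float_of'; lia. }
  destruct (Rlt_le_dec z (-1)) as [hz|hz].
  {
    exists 0, eta. split; [auto|]. split; [auto|]. right. split.
    - intro Hw. unfold itv_wf in Hw. apply xle_Fin in Hw. lra.
    - intros _. apply gs_zero; auto. lra. }
  destruct (Rle_lt_dec 1 z) as [hz'|hz'].
  { exists 0, eta. split; [auto|]. split; [auto|]. left. split.
    - intros _. apply gs_zero; auto. lra.
    - intro Hw. unfold itv_wf in Hw. apply xle_Fin in Hw. lra. }
  assert (Hqzle : (qz <= 0)%Z).
  { destruct Hqz' as [->|h]; [lia|]. apply P_le_inv. rewrite P_0.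
    assert (Rabs z <= 1) by (apply Rabs_le; lra). lra. }
  assert (Hzd : z + d <= 1) by (apply Hznext; auto).
  set (k := (qe - qz)%Z).
  set (W := P k). assert (HW : 0 < W) by apply P_pos.
  assert (HWe : W <= P (emax E)) by (apply P_le; unfold k; lia).
  assert (HWf : is_float E M W).
  { unfold W. rewrite <- (PK k). apply float_of'; unfold k; lia. }
  assert (HWnf : is_float E M (- W)).
  { unfold W. rewrite <- (PK k). replace (- (IZR K * P (k - Mz))) with (IZR (- K) * P (k - Mz)) by (rewrite opp_IZR; ring). apply float_of'; unfold k; lia. }
  assert (HzW : z * W = IZR c * g).
  { rewrite Hc. unfold W, g, d. rewrite Rmult_assoc, <- P_add. f_equal. f_equal. unfold k. lia. }
  assert (HzdW : (z + d) * W = IZR (c + 1) * g).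
  { rewrite Rmult_plus_distr_r, HzW, plus_IZR. unfold W, g, d. rewrite <- P_add.
    replace (qz - Mz + k)%Z with (qe - Mz)%Z by (unfold k; lia). ring. }
  assert (Hetag : is_float E M (eta + g)) by auto.
  pose proof (float_bound _ Hetag) as Hbg. apply abs_le_inv in Hbg.
  destruct (classic ((0 <= a /\ 0 <= c) \/ (a <= 0 /\ c <= 0))%Z) as [Hsame|Hdiff].
  -
    set (b := IZR (a - c) * g).
    assert (Hbf : is_float E M b) by (apply float_of; lia).
    assert (Hb4 : Rabs b <= 4) by (apply small_bound; lia). apply abs_le_inv in Hb4.
    assert (HzWb : z * W + b = eta) by (rewrite HzW, Ha; unfold b; rewrite minus_IZR; ring).
    assert (HzdWb : (z + d) * W + b = eta + g) by (rewrite HzdW, Ha; unfold b; rewrite minus_IZR, plus_IZR; ring).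
    exists W, b. split; [auto|]. split; [auto|]. left. split.
    + intros _. apply (gs_lemma _ _ _ _ (- W) (IZR c * g)).
      * apply xmul_exact; auto; ring.
      * apply xmul_exact; [apply float_of; lia | auto].
      * apply xadd_bounds; auto; try split; try lra.
        assert (-1 * W <= z * W) by (apply Rmult_le_compat_r; lra). lra.
      * exists eta. split; [apply xadd_exact; auto; rewrite <- HzW; auto | lra].
    + intros _. apply (gs_lemma _ _ _ _ (IZR (c + 1) * g) W).
      * apply xmul_exact; [apply float_of; lia | auto].
      * apply xmul_exact; auto; ring.
      * exists (eta + g). split; [apply xadd_exact; auto; rewrite <- HzdW; auto | lra].
      * apply xadd_bounds; auto; try split; try lra.
        assert ((z + d) * W <= 1 * W) by (apply Rmult_le_compat_r; lra). lra.
  -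
    set (b := IZR (a + c + 1) * g).
    assert (Hbf : is_float E M b) by (apply float_of; lia).
    assert (Hb4 : Rabs b <= 4) by (apply small_bound; lia). apply abs_le_inv in Hb4.
    assert (HzWb : z * - W + b = eta + g) by
      (replace (z * - W) with (- (z * W)) by ring; rewrite HzW, Ha; unfold b; rewrite !plus_IZR; ring).
    assert (HzdWb : (z + d) * - W + b = eta) by
      (replace ((z + d) * - W) with (- ((z + d) * W)) by ring; rewrite HzdW, Ha; unfold b; rewrite !plus_IZR; ring).
    exists (- W), b. split; [auto|]. split; [auto|]. right. split.
    + intros _. apply (gs_lemma _ _ _ _ W (IZR (- c) * g)).
      * apply xmul_exact; auto; ring.
      * apply xmul_exact; [apply float_of; lia | rewrite opp_IZR; replace (z * - W) with (- (z * W)) by ring; rewrite HzW; ring].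
      * apply xadd_bounds; auto; try split; try lra.
        assert (-1 * W <= z * W) by (apply Rmult_le_compat_r; lra).
        replace (z * - W) with (- (z * W)) in HzWb by ring. lra.
      * exists (eta + g). split; [apply xadd_exact; auto | lra].
        rewrite <- HzWb, opp_IZR. replace (z * - W) with (- (z * W)) by ring. rewrite HzW. ring.
    + intros _. apply (gs_lemma _ _ _ _ (IZR (- (c + 1)) * g) (- W)).
      * apply xmul_exact; [apply float_of; lia | rewrite opp_IZR; replace ((z + d) * - W) with (- ((z + d) * W)) by ring; rewrite HzdW; ring].
      * apply xmul_exact; auto; ring.
      * exists eta. split; [apply xadd_exact; auto | lra].
        rewrite <- HzdWb, opp_IZR. replace ((z + d) * - W) with (- ((z + d) * W)) by ring. rewrite HzdW. ring.
      * apply xadd_bounds; auto; try split; try lra.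
        assert ((z + d) * W <= 1 * W) by (apply Rmult_le_compat_r; lra).
        replace ((z + d) * - W) with (- ((z + d) * W)) in HzdWb by ring. lra.
Qed.

End F.

Theorem lemma6 (E M : nat) (sigma : xfloat -> xfloat) (c1 c2 eta z : R) :
  (5 <= E)%nat -> (3 <= M)%nat -> (Z.of_nat M <= 2 ^ (Z.of_nat E - 1))%Z ->
  (forall x, in_Fbar E M x -> in_Fbar E M (sigma x)) ->
  is_float E M c1 -> is_float E M c2 -> is_float E M eta ->
  condition1 E M sigma c1 c2 eta ->
  is_float E M z -> xle (Fin (Rabs z)) (fsucc E M (Fin 1)) ->
  exists w b, is_float E M w /\ is_float E M b /\
    let Ilo := Itv (Fin (-1)) (Fin z) in
    let Ihi := Itv (fsucc E M (Fin z)) (Fin 1) in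
    let below := (Fin (- Omega E M), Fin eta) in
    let above := (fsucc E M (Fin eta), Fin (Omega E M)) in
    ((itv_wf Ilo -> gamma_sub E M (mu_sharp E M w b Ilo) (fst below) (snd below)) /\
     (itv_wf Ihi -> gamma_sub E M (mu_sharp E M w b Ihi) (fst above) (snd above)))
    \/
    ((itv_wf Ilo -> gamma_sub E M (mu_sharp E M w b Ilo) (fst above) (snd above)) /\
     (itv_wf Ihi -> gamma_sub E M (mu_sharp E M w b Ihi) (fst below) (snd below))).
Proof.
  intros HE HM _ _ _ _ Heta HC Hz Hzle.
  eapply main_sec; eauto.
Qed.
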